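(* Let $\Bbbk$ be an algebraically closed field of characteristic zero and let $\mathcal{V}$ be the Virasoro algebra over $\Bbbk$. Let $M$ be a simple weight $\mathcal{V}$-module and let $\mu\in\Bbbk$ be such that $\dim M_\mu<\infty$ and $\dim M_{\mu+i}=\infty$ for every $i\in\mathbb{Z}\setminus\{0\}$. Then $\mu\notin\{-1,1\}$.
   Context: The Virasoro algebra $\mathcal{V}$ over $\Bbbk$ has basis consisting of a central element $c$ and elements $e_i$, $i\in\mathbb{Z}$, with bracket $[e_i,e_j]=(j-i)e_{i+j}+\delta_{i,-j}\frac{i^3-i}{12}c$. A weight $\mathcal{V}$-module is a module on which $e_0$ and $c$ act diagonalizably; $M_\lambda=\{m\in M: e_0m=\lambda m\}$. *)

(* Defs.v *)
From HB Require Import structures.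
From mathcomp Require Import all_boot all_order all_algebra.
Set Implicit Arguments. Unset Strict Implicit. Unset Printing Implicit Defensive.
Import Order.TTheory GRing.Theory Num.Theory.
Local Open Scope ring_scope.

Section Virasoro.
Variables (k : fieldType) (M : lmodType k).
(* e i is the action of the basis element e_i, c the action of the central element c *)
Variables (e : int -> {linear M -> M}) (c : {linear M -> M}).

Definition vir_module : Prop :=
  (forall (i j : int) (m : M),
      e i (e j m) - e j (e i m) =
        (j - i)%:~R *: e (i + j) m
        + (if i == - j then ((i ^+ 3 - i)%:~R / 12%:R) *: c m else 0))
  /\ (forall (i : int) (m : M), c (e i m) = e i (c m)).

Definition weight_space (lambda : k) (m : M) : Prop := e 0 m = lambda *: m.

Definition diagonalizable (f : {linear M -> M}) : Prop :=
  forall m : M, exists (n : nat) (v : 'I_n -> M) (lam : 'I_n -> k),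
    (forall i, f (v i) = lam i *: v i) /\ m = \sum_(i < n) v i.

Definition weight_module : Prop := diagonalizable (e 0) /\ diagonalizable c.

Definition submodule (S : M -> Prop) : Prop :=
  [/\ S 0, (forall x y, S x -> S y -> S (x + y)),
      (forall (a : k) x, S x -> S (a *: x)),
      (forall i x, S x -> S (e i x)) & (forall x, S x -> S (c x))].

Definition simple_module : Prop :=
  (exists m : M, m != 0) /\
  forall S, submodule S -> (forall x, S x -> x = 0) \/ (forall x, S x).

End Virasoro.

Definition finite_dim (k : fieldType) (M : lmodType k) (S : M -> Prop) : Prop :=
  exists (n : nat) (v : 'I_n -> M), forall m, S m ->
    exists a : 'I_n -> k, m = \sum_(i < n) a i *: v i.

(* Main.v *)
Require Import Defs.
From HB Require Import structures.
From mathcomp Require Import all_boot all_order all_algebra.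
From mathcomp Require Import zify ring.
From Stdlib Require Import Classical.
Import GRing.Theory.
Local Open Scope ring_scope.

Section LinAlg.
Variables (k : fieldType) (M : lmodType k).

Definition lclosed (P : M -> Prop) :=
  [/\ P 0, (forall x y, P x -> P y -> P (x + y)) & (forall a x, P x -> P (a *: x))].

Definition indep n (w : 'I_n -> M) :=
  forall x : 'I_n -> k, \sum_(i < n) x i *: w i = 0 -> forall i, x i = 0.
Arguments indep {n}.

Lemma lclosed_sum P n (F : 'I_n -> M) : lclosed P -> (forall i, P (F i)) ->
  P (\sum_(i < n) F i).
Proof. by case=> P0 PD _ HF; apply: big_ind => // i _; exact: HF. Qed.

Lemma lclosed_ker P (f : M -> M) : lclosed P ->
  (forall x y, f (x + y) = f x + f y) -> (forall a x, f (a *: x) = a *: f x) ->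
  lclosed (fun m => P m /\ f m = 0).
Proof.
case=> P0 PD PZ fD fZ; split.
- split=> //; have := fZ 0 0; rewrite !scale0r => ->; done.
- by move=> x y [Px fx] [Py fy]; split; [exact: PD | rewrite fD fx fy addr0].
- by move=> a x [Px fx]; split; [exact: PZ | rewrite fZ fx scaler0].
Qed.

Lemma get_indep P : lclosed P -> ~ finite_dim P -> forall N,
  exists w : nat -> M, (forall i, P (w i)) /\ indep (fun i : 'I_N => w i).
Proof.
case=> P0 PD PZ Hnf; elim=> [|N [w [Pw Iw]]].
  by exists (fun _ => 0); split=> // x _ [].
have [m [Pm Hm]] : exists m, P m /\ ~ exists a : 'I_N -> k, m = \sum_(i < N) a i *: w i.
  apply: NNPP => H; apply: Hnf; exists N; exists (fun i : 'I_N => w i) => m Pm.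
  apply: NNPP => Hn; apply: H; exists m; split=> //.
exists (fun n => if n == N then m else w n); split.
  by move=> i; case: eqP.
move=> x; rewrite big_ord_recr /= eqxx.
under eq_bigr => i _ do rewrite (ltn_eqF (ltn_ord i)).
move=> Hs.
have xN : x ord_max = 0.
  case: (eqVneq (x ord_max) 0) => // Hx; exfalso; apply: Hm.
  exists (fun i => - (x (widen_ord (leqnSn N) i) / x ord_max)).
  have : x ord_max *: m = - \sum_(i < N) x (widen_ord (leqnSn N) i) *: w i.
    by apply/eqP; rewrite -addr_eq0 addrC Hs.
  move=> /(congr1 (fun y => (x ord_max)^-1 *: y)).
  rewrite scalerA mulVf // scale1r => ->.
  rewrite scalerN scaler_sumr -sumrN; apply: eq_bigr => i _.
  by rewrite scalerA scaleNr mulrC.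
move=> i; case: (ltnP i N) => hi.
  have -> : i = widen_ord (leqnSn N) (Ordinal hi) by apply: val_inj.
  apply: (Iw (fun j => x (widen_ord (leqnSn N) j))).
  by rewrite xN scale0r addr0 in Hs.
have -> : i = ord_max by apply: val_inj; apply/eqP; rewrite eqn_leq hi -ltnS ltn_ord.
exact: xN.
Qed.

Lemma fsum (f : M -> M) n (F : 'I_n -> M) :
  (forall x y, f (x + y) = f x + f y) -> (forall a x, f (a *: x) = a *: f x) ->
  f (\sum_(i < n) F i) = \sum_(i < n) f (F i).
Proof.
move=> fD fZ; have f0 : f 0 = 0 by have := fZ 0 0; rewrite !scale0r.
by apply: (big_morph f fD f0).
Qed.

Lemma step P (f : M -> M) b (t : 'I_b -> M) N (w : 'I_N -> M) :
  lclosed P -> (forall x y, f (x + y) = f x + f y) -> (forall a x, f (a *: x) = a *: f x) ->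
  (forall m, P m -> exists a : 'I_b -> k, f m = \sum_(l < b) a l *: t l) ->
  (forall i, P (w i)) -> indep w ->
  exists r (w' : 'I_r -> M), [/\ (N <= r + b)%N, indep w' & forall s, P (w' s) /\ f (w' s) = 0].
Proof.
move=> HP fD fZ Hf Pw Iw.
have [a Ha] := fin_all_exists (fun i : 'I_N => Hf (w i) (Pw i)).
pose A : 'M[k]_(N, b) := \matrix_(i, l) a i l.
pose X := row_base (kermx A).
have XA : X *m A = 0.
  by apply/eqP; rewrite -sub_kermx /X eq_row_base submx_refl.
exists (\rank (kermx A)), (fun s => \sum_(i < N) X s i *: w i); split.
- rewrite mxrank_ker; have := rank_leq_col A; lia.
- move=> y Hy.
  have H0 : (\row_s y s) *m X = 0.
    apply/rowP => i; rewrite [RHS]mxE.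
    apply: (Iw (fun i => ((\row_s y s) *m X) 0 i)) => {i}.
    rewrite -[RHS]Hy.
    under eq_bigr => i _ do rewrite mxE scaler_suml.
    rewrite exchange_big /=; apply: eq_bigr => s _.
    rewrite scaler_sumr; apply: eq_bigr => i _.
    by rewrite mxE scalerA.
  have H1 := row_free_inj (row_base_free (kermx A)) (etrans H0 (esym (mul0mx _ X))).
  by move=> s; move/rowP: H1 => /(_ s); rewrite !mxE.
- move=> s; split.
    by apply: lclosed_sum => // i; case: HP => _ _ PZ; apply: PZ.
  rewrite fsum //.
  under eq_bigr => i _ do rewrite fZ Ha scaler_sumr.
  rewrite exchange_big /=.
  rewrite (eq_bigr (fun l => (X *m A) s l *: t l)).
    by rewrite XA; apply: big1 => l _; rewrite mxE scale0r.
  move=> l _; rewrite mxE scaler_suml; apply: eq_bigr => i _.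
  by rewrite scalerA !mxE.
Qed.

Lemma indep_nz r (w : 'I_r -> M) (i : 'I_r) : indep w -> w i != 0.
Proof.
move=> Iw; apply/eqP => H.
have Hs : \sum_(j < r) (if j == i then 1 else 0) *: w j = 0.
  rewrite (bigD1 i) //= eqxx H scaler0 add0r big1 // => j /negbTE ->.
  by rewrite scale0r.
have := Iw _ Hs i; rewrite eqxx; apply/eqP; exact: oner_neq0.
Qed.

End LinAlg.
Arguments lclosed {k M}.
Arguments indep {k M n}.
Arguments get_indep {k M P}.
Arguments lclosed_ker {k M P f}.
Arguments indep_nz {k M r w}.

Section HL.
Variables (k : fieldType) (M : lmodType k) (E : int -> M -> M) (beta : int -> int -> k).
Hypothesis Hchar : [pchar k] =i pred0.
Hypothesis HEd : forall i x y, E i (x + y) = E i x + E i y.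
Hypothesis HEs : forall i (a : k) x, E i (a *: x) = a *: E i x.
Hypothesis Hbr : forall i j x,
  E i (E j x) - E j (E i x) = (j - i)%:~R *: E (i + j) x + beta i j *: x.
Hypothesis Hbeta : forall i j, i + j != 0 -> beta i j = 0.
Hypothesis Hb0 : forall j, beta 0 j = 0.
Hypothesis Hsimp : forall S : M -> Prop, S 0 -> (forall x y, S x -> S y -> S (x + y)) ->
  (forall a x, S x -> S (a *: x)) -> (forall i x, S x -> S (E i x)) ->
  (forall x, S x -> x = 0) \/ (forall x, S x).

Lemma E0 i : E i 0 = 0.
Proof. by have := HEs i 0 0; rewrite !scale0r. Qed.

Lemma EN i x : E i (- x) = - E i x.
Proof. by rewrite -scaleN1r HEs scaleN1r. Qed.

Lemma Esum i I (r : seq I) (F : I -> M) :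
  E i (\sum_(j <- r) F j) = \sum_(j <- r) E i (F j).
Proof. exact: (big_morph (E i) (HEd i) (E0 i)). Qed.

Lemma natn0 n : (n.+1)%:R != 0 :> k.
Proof. by rewrite ((pcharf0P k).1 Hchar). Qed.

Lemma Ecomm j x lam : E 0 x = lam *: x -> E 0 (E j x) = (lam + j%:~R) *: E j x.
Proof.
move=> Hx; have := Hbr 0 j x.
rewrite Hb0 scale0r addr0 subr0 add0r Hx HEs => /eqP; rewrite subr_eq => /eqP ->.
by rewrite scalerDl addrC.
Qed.

Lemma allpos v : E 1 v = 0 -> E 2 v = 0 -> forall n : nat, E (n.+1)%:Z v = 0.
Proof.
move=> h1 h2.
suff H : forall n, E n.+1%:Z v = 0 /\ E n.+2%:Z v = 0 by move=> n; case: (H n).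
elim=> [|n [IH1 IH2]]; first by split.
split=> //; have := Hbr 1 n.+2 v.
rewrite IH2 h1 !E0 subrr Hbeta; last by apply/eqP; lia.
rewrite scale0r addr0 => /esym /eqP; rewrite scaler_eq0 => /orP [|/eqP //].
have -> : (n.+2%:Z - 1) = n.+1%:Z by lia.
by move=> h; exfalso; move: (natn0 n); rewrite h.
Qed.

Inductive gen (v : M) : M -> Prop :=
 | gen0 : gen v 0
 | genv : gen v v
 | genD x y : gen v x -> gen v y -> gen v (x + y)
 | genZ a x : gen v x -> gen v (a *: x)
 | genN n x : gen v x -> gen v (E (Negz n) x).

Lemma gen_Epos lam v : E 0 v = lam *: v -> E 1 v = 0 -> E 2 v = 0 ->
  forall x, gen v x -> forall n : nat, gen v (E n%:Z x).
Proof.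
move=> hv h1 h2 x0; elim=> [|| x y _ IHx _ IHy | a x _ IH | m x gx IH] n.
- rewrite E0; exact: gen0.
- case: n => [|n]; first by rewrite hv; apply: genZ; exact: genv.
  rewrite allpos //; exact: gen0.
- rewrite HEd; apply: genD; [exact: IHx | exact: IHy].
- rewrite HEs; apply: genZ; exact: IH.
- have := Hbr n (Negz m) x; move/eqP; rewrite subr_eq => /eqP ->.
  apply: genD; [apply: genD | apply: genN; exact: IH].
  + apply: genZ; case: (n%:Z + Negz m) => [n'|m']; [exact: IH | exact: genN].
  + apply: genZ; exact: gx.
Qed.

Lemma gen_all lam v : v != 0 -> E 0 v = lam *: v -> E 1 v = 0 -> E 2 v = 0 ->
  forall x, gen v x.
Proof.
move=> hv0 hv h1 h2.
have HE : forall i x, gen v x -> gen v (E i x).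
  move=> [n|m] x gx; [exact: (@gen_Epos lam v hv h1 h2 x gx n) | exact: genN].
case: (@Hsimp (gen v) (gen0 v) (@genD v) (@genZ v) HE) => [H|//].
by move: hv0; rewrite (H v (genv v)) eqxx.
Qed.

Definition eig lam (p : M * nat) := E 0 p.1 = (lam - (p.2.+1)%:R) *: p.1.

Lemma gen_dec lam v : E 0 v = lam *: v -> forall x, gen v x ->
  exists a (l : seq (M * nat)), (forall p, p \in l -> eig lam p) /\ x = a *: v + \sum_(p <- l) p.1.
Proof.
move=> hv x0; elim=> [|| x y _ [a1 [l1 [H1 ->]]] _ [a2 [l2 [H2 ->]]]
  | b x _ [a [l [H ->]]] | m x _ [a [l [H ->]]]].
- by exists 0, [::]; split=> //; rewrite scale0r big_nil addr0.
- by exists 1, [::]; split=> //; rewrite scale1r big_nil addr0.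
- exists (a1 + a2), (l1 ++ l2); split.
    by move=> p; rewrite mem_cat => /orP [] ?; [exact: H1 | exact: H2].
  by rewrite big_cat scalerDl addrACA.
- exists (b * a), [seq (b *: p.1, p.2) | p <- l]; split.
    move=> q /mapP [p pl ->]; rewrite /eig /= HEs (H p pl) !scalerA.
    by rewrite mulrC.
  by rewrite big_map scalerDr scaler_sumr scalerA.
- exists 0, ((a *: E (Negz m) v, m) :: [seq (E (Negz m) p.1, (p.2 + m.+1)%N) | p <- l]).
  split.
    move=> q; rewrite inE => /orP [/eqP -> | /mapP [p pl ->]]; rewrite /eig /=.
      rewrite HEs (@Ecomm _ _ lam hv) !scalerA NegzE intrN.
      by rewrite mulrC.
    rewrite (Ecomm _ _ _ (H p pl)) NegzE intrN -addrA -opprD.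
    congr ((_ - _) *: _).
    rewrite -[(Posz m.+1)%:~R]/(m.+1%:R) -natrD; congr _%:R; lia.
  by rewrite big_cons big_map scale0r add0r HEd HEs Esum.
Qed.

Lemma eig_sum0 lam (l : seq (M * nat)) : (forall p, p \in l -> eig lam p) ->
  E 0 (\sum_(p <- l) p.1) = lam *: \sum_(p <- l) p.1 -> \sum_(p <- l) p.1 = 0.
Proof.
have [n] := ubnP (size l); elim: n l => // n IH [|p l] /=; first by rewrite big_nil.
rewrite ltnS => hs Hl; rewrite big_cons; set s := \sum_(q <- l) q.1 => Hy.
pose al := lam - (p.2.+1)%:R.
have Hp : E 0 p.1 = al *: p.1 by apply: Hl; rewrite inE eqxx.
have Hq : forall q, q \in l -> eig lam q by move=> q ql; apply: Hl; rewrite inE ql orbT.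
pose l2 := [seq ((lam - (q.2.+1)%:R - al) *: q.1, q.2) | q <- l].
have Es : \sum_(q <- l2) q.1 = E 0 s - al *: s.
  rewrite big_map /s Esum scaler_sumr -sumrB; apply: eq_big_seq => q ql.
  by rewrite /= (Hq q ql) scalerBl.
have Es0 : E 0 s = lam *: (p.1 + s) - al *: p.1 by rewrite -Hy HEd Hp [al *: p.1 + _]addrC addrK.
have Hs2 : \sum_(q <- l2) q.1 = (lam - al) *: (p.1 + s).
  by rewrite Es Es0 [(lam - al) *: _]scalerBl [al *: (_ + _)]scalerDr opprD addrA.
have : (lam - al) *: (p.1 + s) = 0.
  rewrite -Hs2; apply: IH.
  - by rewrite size_map.
  - move=> q /mapP [q' q'l ->]; rewrite /eig /= HEs (Hq q' q'l) !scalerA.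
    by rewrite mulrC.
  - by rewrite Hs2 HEs Hy !scalerA mulrC.
move/eqP; rewrite scaler_eq0 => /orP [|/eqP //].
have -> : lam - al = (p.2.+1)%:R by rewrite /al opprB addrCA subrr addr0.
by rewrite (negbTE (natn0 _)).
Qed.

Lemma HL lam v : v != 0 -> E 0 v = lam *: v -> E 1 v = 0 -> E 2 v = 0 ->
  forall m, E 0 m = lam *: m -> exists a, m = a *: v.
Proof.
move=> hv0 hv h1 h2 m hm.
have [a [l [Hl Hx]]] := @gen_dec lam v hv m (@gen_all lam v hv0 hv h1 h2 m).
exists a.
have Hs : \sum_(p <- l) p.1 = m - a *: v by rewrite Hx addrC addKr.
suff H0 : \sum_(p <- l) p.1 = 0 by rewrite Hx H0 addr0.
apply: (@eig_sum0 lam l Hl).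
by rewrite Hs HEd EN HEs hm hv scalerBr !scalerA mulrC.
Qed.

End HL.

Section Twist.
Variables (k : fieldType) (M : lmodType k) (E : int -> M -> M) (beta : int -> int -> k).
Hypothesis HEd : forall i x y, E i (x + y) = E i x + E i y.
Hypothesis HEs : forall i (a : k) x, E i (a *: x) = a *: E i x.
Hypothesis Hbr : forall i j x,
  E i (E j x) - E j (E i x) = (j - i)%:~R *: E (i + j) x + beta i j *: x.
Hypothesis Hbeta : forall i j, i + j != 0 -> beta i j = 0.
Hypothesis Hb0 : forall j, beta 0 j = 0.
Hypothesis Hsimp : forall S : M -> Prop, S 0 -> (forall x y, S x -> S y -> S (x + y)) ->
  (forall a x, S x -> S (a *: x)) -> (forall i x, S x -> S (E i x)) ->
  (forall x, S x -> x = 0) \/ (forall x, S x).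

Definition Et i x := - E (- i) x.
Definition bt i j := beta (- i) (- j).

Lemma EN' i x : E i (- x) = - E i x.
Proof. by rewrite -scaleN1r HEs scaleN1r. Qed.

Lemma tw_d i x y : Et i (x + y) = Et i x + Et i y.
Proof. by rewrite /Et HEd opprD. Qed.

Lemma tw_s i a x : Et i (a *: x) = a *: Et i x.
Proof. by rewrite /Et HEs scalerN. Qed.

Lemma tw_br i j x :
  Et i (Et j x) - Et j (Et i x) = (j - i)%:~R *: Et (i + j) x + bt i j *: x.
Proof.
rewrite /Et /bt !EN' !opprK Hbr.
have -> : - j - - i = - (j - i) by rewrite opprB opprK addrC.
by rewrite intrN scaleNr scalerN opprD.
Qed.

Lemma tw_beta i j : i + j != 0 -> bt i j = 0.
Proof. by move=> h; apply: Hbeta; rewrite -opprD oppr_eq0. Qed.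

Lemma tw_b0 j : bt 0 j = 0.
Proof. by rewrite /bt oppr0 Hb0. Qed.

Lemma tw_simp : forall S : M -> Prop, S 0 -> (forall x y, S x -> S y -> S (x + y)) ->
  (forall a x, S x -> S (a *: x)) -> (forall i x, S x -> S (Et i x)) ->
  (forall x, S x -> x = 0) \/ (forall x, S x).
Proof.
move=> S S0 SD SZ SE; apply: Hsimp => // i x Sx.
have -> : E i x = (-1) *: Et (- i) x by rewrite /Et opprK scaleN1r opprK.
by apply: SZ; apply: SE.
Qed.

End Twist.



Arguments tw_d {k M E}. Arguments tw_s {k M E}. Arguments tw_br {k M E beta}. Arguments tw_beta {k beta}. Arguments tw_b0 {k beta}. Arguments tw_simp {k M E}. Arguments Et {k M}.
Section Core.
Variables (k : fieldType) (M : lmodType k) (E : int -> M -> M) (beta : int -> int -> k).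
Hypothesis Hchar : [pchar k] =i pred0.
Hypothesis HEd : forall i x y, E i (x + y) = E i x + E i y.
Hypothesis HEs : forall i (a : k) x, E i (a *: x) = a *: E i x.
Hypothesis Hbr : forall i j x,
  E i (E j x) - E j (E i x) = (j - i)%:~R *: E (i + j) x + beta i j *: x.
Hypothesis Hbeta : forall i j, i + j != 0 -> beta i j = 0.
Hypothesis Hb0 : forall j, beta 0 j = 0.
Hypothesis Hb1 : beta 1 (-1) = 0.
Hypothesis Hsimp : forall S : M -> Prop, S 0 -> (forall x y, S x -> S y -> S (x + y)) ->
  (forall a x, S x -> S (a *: x)) -> (forall i x, S x -> S (E i x)) ->
  (forall x, S x -> x = 0) \/ (forall x, S x).
Hypothesis Hfin : finite_dim (fun m => E 0 m = 1 *: m).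
Hypothesis Hinf : forall i : int, i != 0 -> ~ finite_dim (fun m => E 0 m = (1 + i%:~R) *: m).

Lemma HLc (i : int) v : i != 0 -> E 0 v = (1 + i%:~R) *: v -> E 1 v = 0 -> E 2 v = 0 -> v = 0.
Proof.
move=> hi hv h1 h2; case: (eqVneq v 0) => // hv0; exfalso; apply: (Hinf i hi).
exists 1%N; exists (fun _ => v) => m hm.
have [a ->] := HL _ _ _ _ Hchar HEd HEs Hbr Hbeta Hb0 Hsimp _ _ hv0 hv h1 h2 _ hm.
by exists (fun _ => a); rewrite big_ord1.
Qed.

Lemma LLc (i : int) v : i != 0 -> E 0 v = (1 + i%:~R) *: v -> E (-1) v = 0 -> E (-2) v = 0 -> v = 0.
Proof.
move=> hi hv h1 h2; case: (eqVneq v 0) => // hv0; exfalso; apply: (Hinf i hi).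
exists 1%N; exists (fun _ => v) => m hm.
have HL' := HL _ _ _ _ Hchar (tw_d HEd) (tw_s HEs) (tw_br HEs Hbr) (tw_beta Hbeta) (tw_b0 Hb0)
  (tw_simp Hsimp).
have [a ->] : exists a, m = a *: v.
  apply: (HL' (- (1 + i%:~R)) v hv0).
  - by rewrite /Et oppr0 hv scaleNr.
  - by rewrite /Et h1 oppr0.
  - by rewrite /Et h2 oppr0.
  - by rewrite /Et oppr0 hm scaleNr.
by exists (fun _ => a); rewrite big_ord1.
Qed.


Lemma E0z i : E i 0 = 0.
Proof. by have := HEs i 0 0; rewrite !scale0r. Qed.

Lemma wt (i j : int) x : E 0 x = (1 + i%:~R) *: x -> E 0 (E j x) = (1 + (i + j)%:~R) *: E j x.
Proof.
move=> Hx; have := Hbr 0 j x.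
rewrite Hb0 scale0r addr0 subr0 add0r Hx HEs => /eqP; rewrite subr_eq => /eqP ->.
rewrite [in RHS]intrD [in RHS]addrA [in RHS]scalerDl; exact: addrC.
Qed.

Lemma wt1 x (i : int) : i = 0 -> E 0 x = (1 + i%:~R) *: x -> E 0 x = 1 *: x.
Proof.
move=> -> h; rewrite h; have z : ((0:int)%:~R : k) = 0 by [].
by rewrite z addr0.
Qed.

Theorem core : False.
Proof.
have [b [t Ht]] := Hfin.
pose P0 := fun m => E 0 m = (1 + (-1)%:~R) *: m.
have lc0 : lclosed P0.
  split; rewrite /P0.
  - by rewrite E0z scaler0.
  - by move=> x y hx hy; rewrite HEd hx hy scalerDr.
  - by move=> a x hx; rewrite HEs hx !scalerA mulrC.
have nf0 : ~ finite_dim P0 by apply: Hinf.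
have tg : forall (f : M -> M), (forall m, P0 m -> E 0 (f m) = 1 *: f m) ->
    forall P : M -> Prop, (forall m, P m -> P0 m) ->
    forall m, P m -> exists a : 'I_b -> k, f m = \sum_(l < b) a l *: t l.
  by move=> f hf P hP m Pm; apply: Ht; apply: hf; apply: hP.
have [w0 [Pw0 Iw0]] := get_indep lc0 nf0 (4 * b).+1.
pose f1 := fun m => E 1 m.
pose f2 := fun m => E 2 (E (-1) m).
pose f3 := fun m => E 3 (E (-2) m).
pose f4 := fun m => E 2 (E (-1) (E 2 (E (-2) m))).
have hf1 : forall m, P0 m -> E 0 (f1 m) = 1 *: f1 m.
  by move=> m h; apply: (@wt1 _ (-1 + 1)) => //; apply: wt.
have hf2 : forall m, P0 m -> E 0 (f2 m) = 1 *: f2 m.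
  by move=> m h; apply: (@wt1 _ ((-1 + -1) + 2)) => //; apply: wt; apply: wt.
have hf3 : forall m, P0 m -> E 0 (f3 m) = 1 *: f3 m.
  by move=> m h; apply: (@wt1 _ ((-1 + -2) + 3)) => //; apply: wt; apply: wt.
have hf4 : forall m, P0 m -> E 0 (f4 m) = 1 *: f4 m.
  move=> m h; apply: (@wt1 _ ((((-1 + -2) + 2) + -1) + 2)) => //.
  by apply: wt; apply: wt; apply: wt; apply: wt.
have [r1 [w1 [le1 I1 H1]]] := @step k M P0 f1 b t _ (fun i : 'I_(4 * b).+1 => w0 i) lc0
  (fun x y => HEd _ x y) (fun a x => HEs _ a x) (tg _ hf1 _ (fun m h => h)) (fun i => Pw0 i) Iw0.
pose P1 := fun m => P0 m /\ f1 m = 0.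
have lc1 : lclosed P1 by apply: lclosed_ker => //; [exact: HEd | exact: HEs].
have [r2 [w2 [le2 I2 H2]]] := @step k M P1 f2 b t _ w1 lc1
  (fun x y => ltac:(by rewrite /f2 !HEd)) (fun a x => ltac:(by rewrite /f2 !HEs))
  (tg _ hf2 _ (fun m (h : P1 m) => proj1 h)) H1 I1.
pose P2 := fun m => P1 m /\ f2 m = 0.
have lc2 : lclosed P2.
  by apply: lclosed_ker => // *; rewrite /f2 ?HEd ?HEs.
have [r3 [w3 [le3 I3 H3]]] := @step k M P2 f3 b t _ w2 lc2
  (fun x y => ltac:(by rewrite /f3 !HEd)) (fun a x => ltac:(by rewrite /f3 !HEs))
  (tg _ hf3 _ (fun m (h : P2 m) => proj1 (proj1 h))) H2 I2.
pose P3 := fun m => P2 m /\ f3 m = 0.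
have lc3 : lclosed P3.
  by apply: lclosed_ker => // *; rewrite /f3 ?HEd ?HEs.
have [r4 [w4 [le4 I4 H4]]] := @step k M P3 f4 b t _ w3 lc3
  (fun x y => ltac:(by rewrite /f4 !HEd)) (fun a x => ltac:(by rewrite /f4 !HEs))
  (tg _ hf4 _ (fun m (h : P3 m) => proj1 (proj1 (proj1 h)))) H3 I3.
have r4pos : (0 < r4)%N by lia.
pose p0 := w4 (Ordinal r4pos).
have p0nz : p0 != 0 by apply: indep_nz.
have [[[[hp0 C1] C2] C3] C4] := H4 (Ordinal r4pos).
rewrite -/p0 in hp0 C1 C2 C3 C4.
rewrite /f1 /f2 /f3 /f4 in C1 C2 C3 C4.
have brk : forall i j x, E i (E j x) =
    (j - i)%:~R *: E (i + j) x + beta i j *: x + E j (E i x).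
  by move=> i j x; apply/eqP; rewrite -subr_eq Hbr.
have sc0 : forall (n : nat) (x : M), ((n.+1)%:Z)%:~R *: x = 0 -> x = 0.
  move=> n x /eqP; rewrite scaler_eq0 => /orP [h|/eqP //].
  by exfalso; move: (@natn0 k Hchar n) => /negP; apply; exact: h.
have E0m : forall (i : int) x, i = -1 -> E 0 x = (1 + i%:~R) *: x -> E 0 x = 0.
  by move=> i x -> ->; rewrite intrN subrr scale0r.
have br1m : forall x, E 0 x = 0 -> E 1 x = 0 -> E 1 (E (-1) x) = 0.
  move=> x h0 h1; rewrite brk h1 E0z Hb1 scale0r !addr0.
  have -> : (1 + -1 : int) = 0 by [].
  by rewrite h0 scaler0.
have hp00 : E 0 p0 = 0 by apply: (E0m (-1)).
have u0z : E (-1) p0 = 0.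
  apply: (HLc (-1 + -1)) => //; [exact: wt | exact: br1m].
set y := E (-2) p0 in C3 C4 *.
have wy : E 0 y = (1 + (-1 + -2)%:~R) *: y by exact: wt.
have y1 : E 1 y = 0.
  rewrite /y brk C1 E0z Hbeta // scale0r !addr0.
  have -> : (1 + -2 : int) = -1 by [].
  by rewrite u0z scaler0.
have y4 : E 4 y = 0.
  apply: (sc0 1%N); have := brk 1 3 y.
  rewrite C3 y1 !E0z Hbeta // scale0r !addr0 => <-.
  by [].
have y5 : E 5 y = 0.
  apply: (sc0 2%N); have := brk 1 4 y.
  rewrite y4 y1 !E0z Hbeta // scale0r !addr0 => <-.
  by [].
set p := E 2 y in C4 *.
have wp : E 0 p = (1 + ((-1 + -2) + 2)%:~R) *: p by exact: wt.
have wp0 : E 0 p = 0 by apply: (E0m _ _ _ wp).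
have p1 : E 1 p = 0.
  rewrite /p brk y1 E0z Hbeta // scale0r !addr0.
  have -> : (1 + 2 : int) = 3 by [].
  by rewrite C3 scaler0.
have p3 : E 3 p = 0.
  rewrite /p brk C3 E0z Hbeta // scale0r !addr0.
  have -> : (3 + 2 : int) = 5 by [].
  by rewrite y5 scaler0.
have um : E (-1) p = 0.
  apply: (HLc (((-1 + -2) + 2) + -1)) => //; [exact: wt | exact: br1m].
have q0 : E 2 p = 0.
  set q := E 2 p.
  have wq : E 0 q = (1 + (((-1 + -2) + 2) + 2)%:~R) *: q by exact: wt.
  have q1 : E 1 q = 0.
    rewrite /q brk p1 E0z Hbeta // scale0r !addr0.
    have -> : (1 + 2 : int) = 3 by [].
    by rewrite p3 scaler0.
  have qm : E (-1) q = 0.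
    rewrite /q brk um E0z Hbeta // scale0r !addr0.
    have -> : (-1 + 2 : int) = 1 by [].
    by rewrite p1 scaler0.
  have := brk 1 (-1) q.
  rewrite qm q1 !E0z Hb1 scale0r !addr0.
  have -> : (1 + -1 : int) = 0 by [].
  rewrite wq scalerA => /esym /eqP; rewrite scaler_eq0 => /orP [h|/eqP //].
  exfalso; move: h.
  have -> : (((-1 - 1 : int)%:~R * (1 + (((-1 + -2) + 2) + 2 : int)%:~R)) : k) = - (3.+1)%:R.
    by ring.
  by rewrite oppr_eq0 (negbTE (@natn0 k Hchar 3)).
have pz : p = 0.
  by apply: (HLc ((-1 + -2) + 2)) => //.
have yz : y = 0 by apply: (HLc (-1 + -2)).
have : p0 = 0 by apply: (LLc (-1)).
by move/eqP: p0nz.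
Qed.

End Core.

Lemma fd_mono (k : fieldType) (M : lmodType k) (P Q : M -> Prop) :
  (forall m, P m -> Q m) -> finite_dim Q -> finite_dim P.
Proof. by move=> hPQ [n [v H]]; exists n; exists v => m /hPQ; exact: H. Qed.

Theorem lemma4 (k : closedFieldType) (Hchar : [pchar k] =i pred0)
  (M : lmodType k) (e : int -> {linear M -> M}) (c : {linear M -> M})
  (HV : vir_module e c) (Hw : weight_module e c) (Hs : simple_module e c)
  (mu : k)
  (Hfin : finite_dim (weight_space e mu))
  (Hinf : forall i : int, i != 0 -> ~ finite_dim (weight_space e (mu + i%:~R))) :
  mu != 1 /\ mu != -1.
Proof.
have [HV1 HV2] := HV; have [Hne Hsimp0] := Hs.
have [z Hz] : exists z, forall m, c m = z *: m.
  have [m0 hm0] := Hne.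
  have [n [v [lam [Hv Hm]]]] := Hw.2 m0.
  have [i hi] : exists i, v i != 0.
    apply: NNPP => H; move: hm0; rewrite Hm big1 ?eqxx // => i _.
    apply: NNPP => h; apply: H; exists i; apply/eqP; exact: h.
  exists (lam i).
  pose S := fun x => c x = lam i *: x.
  have HS : submodule e c S.
    split; rewrite /S.
    - by rewrite linear0 scaler0.
    - by move=> x y hx hy; rewrite linearD hx hy scalerDr.
    - by move=> a x hx; rewrite linearZZ hx !scalerA mulrC.
    - by move=> j x hx; rewrite HV2 hx linearZZ.
    - by move=> x hx; rewrite {1}hx linearZZ.
  case: (Hsimp0 S HS) => H; last exact: H.
  by move: hi; rewrite (H _ (Hv i)) eqxx.
pose beta := fun i j : int => if i == - j then ((i ^+ 3 - i)%:~R / 12%:R) * z else 0.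
pose E := fun i (m : M) => e i m.
have HEd : forall i x y, E i (x + y) = E i x + E i y by move=> i x y; rewrite /E linearD.
have HEs : forall i (a : k) x, E i (a *: x) = a *: E i x by move=> i a x; rewrite /E linearZZ.
have Hbr : forall i j x,
    E i (E j x) - E j (E i x) = (j - i)%:~R *: E (i + j) x + beta i j *: x.
  move=> i j x; rewrite /E /beta HV1; case: ifP => _; first by rewrite Hz scalerA.
  by rewrite scale0r.
have Hbeta : forall i j, i + j != 0 -> beta i j = 0.
  move=> i j h; rewrite /beta; case: ifP => // /eqP hij.
  by move: h; rewrite hij addNr eqxx.
have Hb0 : forall j, beta 0 j = 0.
  move=> j; rewrite /beta; case: ifP => // _.
  have e3 : (0 ^+ 3 - 0 : int) = 0 by [].
  by rewrite e3 mulr0z !mul0r.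
have Hb1 : beta 1 (-1) = 0.
  rewrite /beta opprK eqxx.
  have e3 : (1 ^+ 3 - 1 : int) = 0 by [].
  by rewrite e3 mulr0z !mul0r.
have Hb1m : beta (-1) 1 = 0.
  rewrite /beta eqxx.
  have e3 : ((-1) ^+ 3 - (-1) : int) = 0 by [].
  by rewrite e3 mulr0z !mul0r.
have Hsimp : forall S : M -> Prop, S 0 -> (forall x y, S x -> S y -> S (x + y)) ->
    (forall a x, S x -> S (a *: x)) -> (forall i x, S x -> S (E i x)) ->
    (forall x, S x -> x = 0) \/ (forall x, S x).
  move=> S S0 SD SZ SE; apply: Hsimp0; split => //.
  by move=> x hx; rewrite Hz; apply: SZ.
split; apply/eqP => hmu; subst mu.
- exact: (@core k M E beta Hchar HEd HEs Hbr Hbeta Hb0 Hb1 Hsimp Hfin Hinf).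
- have Hb1' : bt _ beta 1 (-1) = 0 by rewrite /bt opprK.
  have Hsimp' := tw_simp Hsimp.
  refine (@core k M (Et E) (bt _ beta) Hchar (tw_d HEd) (tw_s HEs) (tw_br HEs Hbr) (tw_beta Hbeta) (tw_b0 Hb0)
    Hb1' Hsimp' _ _).
  + apply: (@fd_mono k M _ _ _ Hfin) => m; rewrite /Et oppr0 => h.
    by rewrite /weight_space -/(E 0 m) -(opprK (E 0 m)) h scale1r scaleN1r.
  + move=> i hi fd; apply: (Hinf (- i)); first by rewrite oppr_eq0.
    apply: (@fd_mono k M _ _ _ fd) => m; rewrite /weight_space /Et oppr0 -/(E 0 m) => h.
    by rewrite h -scaleNr opprD opprK intrN opprK.
Qed.
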